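(* Let $P$ be a finite poset and $t\geq 2$ an integer, and suppose $\mathrm{sat}^{\star}([t]^n,P)=O(1)$ as $n\to\infty$. Then there exists $N\in\mathbb{Z}_{>0}$ such that the function $n\mapsto\mathrm{sat}^{\star}([t]^n,P)$ is constant on the integers $n>N$.
   Context: For positive integers $n,t$, $[n]=\{1,\dots,n\}$ and the hypergrid $[t]^n$ is the set of functions $f:[n]\to[t]$, partially ordered by $f\leq g$ iff $f(i)\leq g(i)$ for all $i\in[n]$. An induced copy of a poset $P$ in a family $\mathcal{F}\subseteq[t]^n$ is an injective map $\phi:P\to\mathcal{F}$ such that $\phi(x)\leq\phi(y)$ iff $x\leq_P y$. A family $\mathcal{F}\subseteq[t]^n$ is induced $P$-free if it contains no induced copy of $P$; it is induced $P$-saturated if it is induced $P$-free and for every $f\in[t]^n\setminus\mathcal{F}$ the family $\mathcal{F}\cup\{f\}$ contains an induced copy of $P$. Whenever $P$ embeds as an induced subposet of $[t]^n$, $\mathrm{sat}^{\star}([t]^n,P)$ denotes the minimum size of an induced $P$-saturated family in $[t]^n$. *)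

(* Defs.v *)
From mathcomp Require Import all_boot all_order.
Set Implicit Arguments. Unset Strict Implicit. Unset Printing Implicit Defensive.
Import Order.TTheory.

(* The hypergrid [t]^n, with [t] = {1..t} modelled by 'I_t = {0..t-1}
   (an order isomorphism, i |-> i+1). *)
Definition grid (t n : nat) := {ffun 'I_n -> 'I_t}.

Definition grid_le (t n : nat) (f g : grid t n) : bool :=
  [forall i, (f i <= g i)%N].

Definition has_induced_copy (d : Order.disp_t) (P : finPOrderType d)
  (t n : nat) (F : {set grid t n}) : bool :=
  [exists phi : {ffun P -> grid t n},
     [&& injectiveb phi,
         [forall x, phi x \in F] &
         [forall x, forall y, grid_le (phi x) (phi y) == (x <= y)%O]]].

Definition induced_free (d : Order.disp_t) (P : finPOrderType d)
  (t n : nat) (F : {set grid t n}) : bool :=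
  ~~ has_induced_copy P F.

Definition induced_saturated (d : Order.disp_t) (P : finPOrderType d)
  (t n : nat) (F : {set grid t n}) : bool :=
  induced_free P F &&
  [forall f : grid t n, (f \notin F) ==> has_induced_copy P (f |: F)].

Definition embeds (d : Order.disp_t) (P : finPOrderType d) (t n : nat) : bool :=
  has_induced_copy P [set: grid t n].

(* sat*([t]^n, P): minimum size of an induced P-saturated family.
   If no such family exists the value is the (junk) default t^n + 1,
   which exceeds the size of every family. *)
Definition sat_star (d : Order.disp_t) (P : finPOrderType d) (t n : nat) : nat :=
  \big[minn/(t ^ n).+1]_(F : {set grid t n} | induced_saturated P F) #|F|.

(* Main.v *)
Require Import Defs.
From mathcomp Require Import all_boot all_order.
From mathcomp Require Import zify.
From Stdlib Require Import Classical.

Set Implicit Arguments. Unset Strict Implicit. Unset Printing Implicit Defensive.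

Definition ext t n (i : 'I_n) (f : grid t n) : grid t n.+1 :=
  [ffun k => if unlift ord_max k is Some k' then f k' else f i].
Definition restr t n (g : grid t n.+1) : grid t n := [ffun k => g (lift ord_max k)].

Lemma restrK t n (i : 'I_n) (f : grid t n) : restr (ext i f) = f.
Proof. by apply/ffunP => k; rewrite !ffunE liftK. Qed.

Lemma ext_max t n (i : 'I_n) (f : grid t n) : ext i f ord_max = f i.
Proof. by rewrite ffunE unlift_none. Qed.

Lemma grid_leS t n (g h : grid t n.+1) :
  grid_le g h = grid_le (restr g) (restr h) && (g ord_max <= h ord_max)%N.
Proof.
apply/forallP/andP => [H|[/forallP H1 H2] k].
  by split=> //; apply/forallP => k; rewrite !ffunE; exact: H.
case: (unliftP ord_max k) => [k' ->|->] //.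
by move: (H1 k'); rewrite !ffunE.
Qed.

Lemma ext_le t n (i : 'I_n) (f g : grid t n) :
  grid_le (ext i f) (ext i g) = grid_le f g.
Proof.
rewrite grid_leS !restrK !ext_max; case E: grid_le => //=.
by move/forallP: E; apply.
Qed.

Lemma grid_le_refl t n (f : grid t n) : grid_le f f.
Proof. by apply/forallP => k; exact: leqnn. Qed.

Definition omin t (x y : 'I_t) := if (x <= y)%N then x else y.
Definition omax t (x y : 'I_t) := if (x <= y)%N then y else x.
Lemma omin_val t (x y : 'I_t) : nat_of_ord (omin x y) = minn x y.
Proof. rewrite /omin; case: ifP => H; lia. Qed.
Lemma omax_val t (x y : 'I_t) : nat_of_ord (omax x y) = maxn x y.
Proof. rewrite /omax; case: ifP => H; lia. Qed.

Definition hmk t n (g : grid t n.+1) (i j : 'I_n) : grid t n :=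
 [ffun k => if k == i then omin (omin (g (lift ord_max i)) (g (lift ord_max j))) (g ord_max)
   else if k == j then omax (omax (g (lift ord_max i)) (g (lift ord_max j))) (g ord_max)
   else g (lift ord_max k)].

Lemma key1 t n (g : grid t n.+1) (i j : 'I_n) (f : grid t n) :
  j != i -> f i = f j -> grid_le (hmk g i j) f = grid_le g (ext i f).
Proof.
move=> ji fij; have fij' : nat_of_ord (f i) = f j by rewrite fij.
rewrite (grid_leS g) restrK ext_max.
apply/forallP/andP => [H|[/forallP H1 H2] k].
- have Hi := H i; have Hj := H j.
  rewrite !ffunE eqxx !omin_val in Hi; rewrite !ffunE (negbTE ji) eqxx !omax_val in Hj.
  split; last by lia.
  apply/forallP => k; rewrite ffunE.
  case: (eqVneq k i) => [->|ki]; first by lia.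
  case: (eqVneq k j) => [->|kj]; first by lia.
  by move: (H k); rewrite ffunE (negbTE ki) (negbTE kj).
- rewrite ffunE.
  case: (eqVneq k i) => [->|ki]; first by rewrite !omin_val; have := H1 i; rewrite ffunE; lia.
  case: (eqVneq k j) => [->|kj].
    by rewrite !omax_val; have := H1 j; have := H1 i; rewrite !ffunE; lia.
  by have := H1 k; rewrite ffunE.
Qed.

Lemma key2 t n (g : grid t n.+1) (i j : 'I_n) (f : grid t n) :
  j != i -> f i = f j -> grid_le f (hmk g i j) = grid_le (ext i f) g.
Proof.
move=> ji fij; have fij' : nat_of_ord (f i) = f j by rewrite fij.
rewrite (grid_leS _ g) restrK ext_max.
apply/forallP/andP => [H|[/forallP H1 H2] k].
- have Hi := H i; have Hj := H j.
  rewrite !ffunE eqxx !omin_val in Hi; rewrite !ffunE (negbTE ji) eqxx !omax_val in Hj.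
  split; last by lia.
  apply/forallP => k; rewrite ffunE.
  case: (eqVneq k i) => [->|ki]; first by lia.
  case: (eqVneq k j) => [->|kj]; first by lia.
  by move: (H k); rewrite ffunE (negbTE ki) (negbTE kj).
- rewrite ffunE.
  case: (eqVneq k i) => [->|ki].
    by rewrite !omin_val; have := H1 j; have := H1 i; rewrite !ffunE; lia.
  case: (eqVneq k j) => [->|kj].
    by rewrite !omax_val; have := H1 j; rewrite !ffunE; lia.
  by have := H1 k; rewrite ffunE.
Qed.

Lemma transfer d (P : finPOrderType d) t a b (S : {set grid t a}) (T : {set grid t b})
  (e : grid t a -> grid t b) :
  {in S &, forall x y, grid_le (e x) (e y) = grid_le x y} ->
  {in S &, injective e} -> (forall x, x \in S -> e x \in T) ->
  has_induced_copy P S -> has_induced_copy P T.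
Proof.
move=> Hle Hinj HT /existsP[phi /and3P[/injectiveP phiI /forallP phiS /forallP phiO]].
apply/existsP; exists [ffun x => e (phi x)]; apply/and3P; split.
- apply/injectiveP => x y; rewrite !ffunE => /(Hinj _ _ (phiS x) (phiS y)).
  exact: phiI.
- by apply/forallP => x; rewrite ffunE; exact: HT.
- apply/forallP => x; apply/forallP => y; rewrite !ffunE Hle //.
  exact: (forallP (phiO x) y).
Qed.

Lemma sat_ext d (P : finPOrderType d) t n (F : {set grid t n}) (i j : 'I_n) :
  j != i -> (forall f, f \in F -> f i = f j) ->
  induced_saturated P F -> induced_saturated P (ext i @: F).
Proof.
move=> ji Hij /andP[Hfree /forallP Hsat]; apply/andP; split.
  apply: contra Hfree; apply: (@transfer _ _ _ _ _ _ _ (@restr t n)).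
  - by move=> x y /imsetP[f Hf ->] /imsetP[g Hg ->]; rewrite !restrK ext_le.
  - by move=> x y /imsetP[f Hf ->] /imsetP[g Hg ->]; rewrite !restrK => ->.
  - by move=> x /imsetP[f Hf ->]; rewrite restrK.
apply/forallP => g; apply/implyP => gF.
case: (eqVneq (g ord_max) (g (lift ord_max i))) => Hc.
  have eg : ext i (restr g) = g.
    apply/ffunP => k; rewrite ffunE.
    by case: (unliftP ord_max k) => [k' ->|->]; rewrite ?liftK ?unlift_none ffunE.
  have rF : restr g \notin F by apply: contra gF => H; rewrite -eg; apply: imset_f.
  have := implyP (Hsat (restr g)) rF; apply: (transfer (e := ext i)).
  - by move=> x y _ _; exact: ext_le.
  - by move=> x y _ _ /(congr1 (@restr t n)); rewrite !restrK.
  - move=> x /setU1P[->|xF]; first by rewrite eg setU11.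
    by apply/setU1P; right; exact: imset_f.
pose h := hmk g i j.
have hF : h \notin F.
  apply/negP => hF; have := Hij _ hF; rewrite !ffunE eqxx (negbTE ji) eqxx.
  move/(congr1 val) => /=; rewrite !omin_val !omax_val => E.
  by move/eqP: Hc; apply; apply: val_inj => /=; lia.
have nh : forall y, y \in F -> (y == h) = false.
  by move=> y yF; apply/negP => /eqP E; rewrite -E yF in hF.
have := implyP (Hsat h) hF.
apply: (transfer (e := fun x => if x == h then g else ext i x)).
- move=> x y /setU1P[->|xF] /setU1P[->|yF]; rewrite ?eqxx ?nh //.
  all: try by rewrite !grid_le_refl.
  all: try by rewrite key1 // Hij.
  all: try by rewrite key2 // Hij.
  all: try by rewrite ext_le.
- move=> x y /setU1P[->|xF] /setU1P[->|yF]; rewrite ?eqxx ?nh //.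
  all: try by move=> E; rewrite E in gF; rewrite imset_f in gF.
  all: try by move=> E; rewrite -E in gF; rewrite imset_f in gF.
  all: try by move/(congr1 (@restr t n)); rewrite !restrK.
- move=> x /setU1P[->|xF]; first by rewrite eqxx setU11.
  by rewrite nh //; apply/setU1P; right; exact: imset_f.
Qed.

Lemma class_exists t n (F : {set grid t n}) : (t ^ #|F| < n)%N ->
  exists i j : 'I_n, j != i /\ forall f, f \in F -> f i = f j.
Proof.
move=> Hn.
pose tau (k : 'I_n) : {ffun {f : grid t n | f \in F} -> 'I_t} := [ffun x => (proj1_sig x : grid t n) k].
case: (classic (exists i j : 'I_n, j != i /\ tau i = tau j)) => [[i [j [ij Hij]]]|H].
  exists i, j; split=> // f fF.
  have := congr1 (fun u : {ffun {f : grid t n | f \in F} -> 'I_t} => u (exist _ f fF)) Hij.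
  by rewrite /= !ffunE.
exfalso.
have inj : injective tau.
  move=> x y Hxy; case: (eqVneq y x) => // nxy; exfalso; apply: H; exists x, y; done.
have := @leq_card _ _ tau inj; rewrite card_ffun card_ord card_sig.
have -> : #|[pred x | x \in F]| = #|F| by apply: eq_card.
rewrite card_ord; lia.
Qed.

Lemma sat_le d (P : finPOrderType d) t n (F : {set grid t n}) :
  induced_saturated P F -> (sat_star P t n <= #|F|)%N.
Proof.
move=> HF; rewrite /sat_star.
have : F \in index_enum {set grid t n} by rewrite mem_index_enum.
elim: (index_enum _) => // a r IH; rewrite big_cons in_cons => /orP[/eqP <-|].
  by rewrite HF geq_minl.
by move/IH; case: ifP => _ // H; rewrite geq_min H orbT.
Qed.

Lemma sat_attained d (P : finPOrderType d) t n :
  (sat_star P t n < (t ^ n).+1)%N ->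
  exists F : {set grid t n}, induced_saturated P F /\ #|F| = sat_star P t n.
Proof.
rewrite /sat_star.
set v := \big[minn/_]_(F | _) _.
have : v = (t ^ n).+1 \/ exists F : {set grid t n}, induced_saturated P F /\ #|F| = v.
  rewrite /v; apply: (big_ind (fun v => v = (t ^ n).+1 \/
       exists F : {set grid t n}, induced_saturated P F /\ #|F| = v)).
  - by left.
  - move=> x y Hx Hy; rewrite /minn; case: ifP => _; done.
  - by move=> F HF; right; exists F.
by case=> [->|//]; rewrite ltnn.
Qed.

Lemma eventually_const (s : nat -> nat) M :
  (forall n, (M <= n)%N -> (s n.+1 <= s n)%N) ->
  exists N, (M <= N)%N /\ forall n, (N <= n)%N -> s n = s N.
Proof.
move=> Hs.
have mono : forall a b, (M <= a)%N -> (a <= b)%N -> (s b <= s a)%N.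
  move=> a b Ma; elim: b => [|b IH]; first by rewrite leqn0 => /eqP ->.
  rewrite leq_eqVlt => /orP[/eqP <-//|ab].
  by apply: leq_trans (IH ab); apply: Hs; apply: leq_trans Ma ab.
suff: forall v M', (M <= M')%N -> (s M' <= v)%N ->
   exists N, (M <= N)%N /\ forall n, (N <= n)%N -> s n = s N.
  by move=> H; apply: (H (s M) M).
elim=> [|v IH] M' MM' sv.
  exists M'; split=> // n Mn; have := mono _ _ MM' Mn; lia.
case: (classic (forall n, (M' <= n)%N -> s n = s M')) => [H|H].
  by exists M'.
have [n Hn] := not_all_ex_not _ _ H.
have [Mn ne] := imply_to_and _ _ Hn.
apply: (IH n); first by apply: leq_trans Mn.
have := mono _ _ MM' Mn; lia.
Qed.

Theorem mainTheorem2 (d : Order.disp_t) (P : finPOrderType d) (t : nat) :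
  (2 <= t)%N ->
  (exists C n0 : nat, forall n : nat, (n0 <= n)%N ->
      embeds P t n /\ (sat_star P t n <= C)%N) ->
  exists N : nat, (0 < N)%N /\
    forall n m : nat, (N < n)%N -> (N < m)%N -> sat_star P t n = sat_star P t m.
Proof.
move=> t2 [C [n0 H]].
have step : forall n, (maxn n0 (t ^ C).+1 <= n)%N ->
    (sat_star P t n.+1 <= sat_star P t n)%N.
  move=> n hn.
  have [_ Hs] := H n (leq_trans (leq_maxl _ _) hn).
  have tCn : (t ^ C < n)%N by apply: leq_trans (leq_maxr _ _) hn.
  have := ltn_expl C t2; have := ltn_expl n t2 => h1 h2.
  have [F [FS Fc]] := sat_attained (P := P) (t := t) (n := n) ltac:(lia).
  have tF : (t ^ #|F| < n)%N.
    apply: leq_ltn_trans tCn; apply: leq_pexp2l; first by lia.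
    by rewrite Fc.
  have [i [j [ji Hij]]] := class_exists tF.
  have S' := sat_ext ji Hij FS.
  apply: leq_trans (sat_le S') _.
  by rewrite card_imset ?Fc //; apply: (can_inj (@restrK t n i)).
have [N0 [_ HN]] := eventually_const step.
exists N0.+1; split=> // n m hn hm.
by rewrite (HN n (ltnW (ltnW hn))) (HN m (ltnW (ltnW hm))).
Qed.
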